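(* Let $\beta=(\pi_1,\pi_2)$ be a chainable pair of patterns, and let $\mathcal{M}^\beta$ be the set of complex matrices $\mathbf{A}$ of the same size as matrices in $\mathcal{B}^\beta$ such that $\operatorname{rank}(\mathbf{A}[R_P,C_P])\le r(\pi_1,\pi_2)$ for every $P\in\mathcal{P}(\mathbf{S}_{\pi_1},\mathbf{S}_{\pi_2})$. Then $$\mathcal{B}^\beta=\Sigma^{\pi_1*\pi_2}\cap\mathcal{M}^\beta.$$
   Context: A pattern is a tuple $\pi=(a,b,c,d)$ of positive integers; $\mathbf{S}_\pi:=\mathbf{I}_a\otimes\mathbf{1}_{b\times c}\otimes\mathbf{I}_d\in\{0,1\}^{abd\times acd}$. A $\pi$-factor is a complex $abd\times acd$ matrix with support in that of $\mathbf{S}_\pi$; $\Sigma^\pi$ is the set of $\pi$-factors. Patterns $\pi_1=(a_1,b_1,c_1,d_1),\pi_2=(a_2,b_2,c_2,d_2)$ are chainable if $a_1c_1/a_2=b_2d_2/d_1=:r(\pi_1,\pi_2)$ is an integer, $a_1\mid a_2$, $d_2\mid d_1$; then $\pi_1*\pi_2:=(a_1,b_1d_1/d_2,a_2c_2/a_1,d_2)$. $\mathcal{B}^\beta:=\{\mathbf{X}_1\mathbf{X}_2:\mathbf{X}_i\in\Sigma^{\pi_i}\}$. For binary $\mathbf{L}\in\{0,1\}^{m\times r},\mathbf{R}\in\{0,1\}^{r\times n}$ let $\mathbf{U}_i:=\mathbf{L}[:,i]\mathbf{R}[i,:]$; $\mathcal{P}(\mathbf{L},\mathbf{R})$ is the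 partition of $\{1,\dots,r\}$ into classes of $i\sim j\iff\mathbf{U}_i=\mathbf{U}_j$, and for a class $P$, $R_P\times C_P$ is the support of $\mathbf{U}_i$, $i\in P$. *)

(* Defs.v *)
From HB Require Import structures.
From mathcomp Require Import all_boot all_order all_algebra.
From mathcomp Require Import complex.
From mathcomp Require Import Rstruct.
Set Implicit Arguments. Unset Strict Implicit. Unset Printing Implicit Defensive.
Import Order.TTheory GRing.Theory Num.Theory.

Definition Cplx := complex Rdefinitions.R.

Record pattern := Pattern { pa : nat; pb : nat; pc : nat; pd : nat }.

Definition pattern_pos (p : pattern) : Prop :=
  [/\ 0 < pa p, 0 < pb p, 0 < pc p & 0 < pd p]%N.

Definition nrows (p : pattern) : nat := (pa p * pb p * pd p)%N.
Definition ncols (p : pattern) : nat := (pa p * pc p * pd p)%N.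

(* Entry (i,j) (0-based, row-major Kronecker indexing) of
   S_p = I_a (x) 1_{b x c} (x) I_d : row i = i1*(b*d) + i2*d + i3,
   column j = j1*(c*d) + j2*d + j3; the entry is 1 iff i1 = j1 and i3 = j3. *)
Definition S_entry (p : pattern) (i j : nat) : bool :=
  [&& (i < nrows p)%N, (j < ncols p)%N,
      i %/ (pb p * pd p) == j %/ (pc p * pd p) & i %% pd p == j %% pd p].

(* S_p as a binary matrix (used at size nrows p x ncols p, possibly given via
   propositionally equal dimensions) *)
Definition Smx (p : pattern) (m n : nat) : 'M[bool]_(m, n) :=
  \matrix_(i < m, j < n) S_entry p i j.

Definition is_factor (p : pattern) {m n : nat} (X : 'M[Cplx]_(m, n)) : Prop :=
  m = nrows p /\ n = ncols p /\
  forall (i : 'I_m) (j : 'I_n), S_entry p i j = false -> X i j = 0%R.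

Definition chainable (p1 p2 : pattern) : Prop :=
  [/\ (pa p2 %| pa p1 * pc p1)%N, (pd p1 %| pb p2 * pd p2)%N,
      (pa p1 * pc p1) %/ pa p2 = (pb p2 * pd p2) %/ pd p1,
      (pa p1 %| pa p2)%N & (pd p2 %| pd p1)%N].

Definition rchain (p1 p2 : pattern) : nat := ((pa p1 * pc p1) %/ pa p2)%N.

Definition pstar (p1 p2 : pattern) : pattern :=
  Pattern (pa p1) ((pb p1 * pd p1) %/ pd p2) ((pa p2 * pc p2) %/ pa p1) (pd p2).

Definition in_B (p1 p2 : pattern) {m n : nat} (A : 'M[Cplx]_(m, n)) : Prop :=
  exists k (X1 : 'M[Cplx]_(m, k)) (X2 : 'M[Cplx]_(k, n)),
    [/\ is_factor p1 X1, is_factor p2 X2 & A = (X1 *m X2)%R].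

Section Partition.
Context {m r n : nat} (L : 'M[bool]_(m, r)) (R : 'M[bool]_(r, n)).

(* support of U_i = L[:,i] R[i,:] *)
Definition Usupp (i : 'I_r) : {set 'I_m * 'I_n} :=
  [set xy | L xy.1 i && R i xy.2].

Definition Ppart : {set {set 'I_r}} :=
  equivalence_partition (fun i j => Usupp i == Usupp j) [set: 'I_r].

(* R_P and C_P for the class P containing i : the projections of supp U_i *)
Definition RowsP (i : 'I_r) : {set 'I_m} := [set x | [exists y, (x, y) \in Usupp i]].
Definition ColsP (i : 'I_r) : {set 'I_n} := [set y | [exists x, (x, y) \in Usupp i]].
End Partition.

(* the submatrix A[Rs, Cs] (rows/columns taken in increasing order) *)
Definition subm {F : Type} {m n : nat} (A : 'M[F]_(m, n))
    (Rs : {set 'I_m}) (Cs : {set 'I_n}) : 'M[F]_(#|Rs|, #|Cs|) :=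
  \matrix_(k < #|Rs|, l < #|Cs|) A (enum_val k) (enum_val l).

Definition in_M (p1 p2 : pattern) {m n : nat} (A : 'M[Cplx]_(m, n)) : Prop :=
  let k := ncols p1 in
  forall P, P \in Ppart (Smx p1 m k) (Smx p2 k n) ->
  forall i, i \in P ->
    (\rank (subm A (RowsP (Smx p1 m k) (Smx p2 k n) i)
                   (ColsP (Smx p1 m k) (Smx p2 k n) i)) <= rchain p1 p2)%N.

(* Main.v *)
Require Import Defs.
From HB Require Import structures.
From mathcomp Require Import all_boot all_order all_algebra.
From mathcomp Require Import complex Rstruct.
From mathcomp Require Import ring zify.
Set Implicit Arguments. Unset Strict Implicit. Unset Printing Implicit Defensive.
Import GRing.Theory.

Section Gen.
Local Open Scope ring_scope.

Definition mask {m n} (A : 'M[Cplx]_(m,n)) (R : {set 'I_m}) (C : {set 'I_n}) : 'M[Cplx]_(m,n) :=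
  \matrix_(x, y) if (x \in R) && (y \in C) then A x y else 0.
Definition selm {m} (R : {set 'I_m}) : 'M[Cplx]_(#|R|, m) :=
  \matrix_(k, x) ((enum_val k == x)%:R).

Lemma sum_sel m (R : {set 'I_m}) (x : 'I_m) (g : 'I_m -> Cplx) :
  \sum_(k < #|R|) (enum_val k == x)%:R * g (enum_val k) = if x \in R then g x else 0.
Proof.
rewrite -(big_enum_val (fun x' => (x' == x)%:R * g x')) /=.
rewrite big_mkcond (bigD1 x) //= big1 => [|i /negbTE hi].
  by rewrite eqxx mul1r addr0.
by rewrite hi mul0r; case: ifP.
Qed.

Lemma mask_subm m n (A : 'M[Cplx]_(m,n)) R C :
  mask A R C = (selm R)^T *m subm A R C *m selm C.
Proof.
apply/matrixP => x y; rewrite !mxE.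
rewrite (eq_bigr (fun l => (enum_val l == y)%:R * (if x \in R then A x (enum_val l) else 0))).
  rewrite (sum_sel C y (fun l => if x \in R then A x l else 0)).
  by case: (x \in R); case: (y \in C).
move=> l _; rewrite mulrC !mxE; congr (_ * _).
rewrite (eq_bigr (fun k => (enum_val k == x)%:R * A (enum_val k) (enum_val l))).
  by rewrite (sum_sel R x (fun x' => A x' (enum_val l))).
by move=> k _; rewrite !mxE.
Qed.

Lemma rank_mask m n (A : 'M[Cplx]_(m,n)) R C :
  (\rank (mask A R C) <= \rank (subm A R C))%N.
Proof.
rewrite mask_subm; apply: leq_trans (mxrankM_maxl _ _) _; exact: mxrankM_maxr.
Qed.

Definition fac1 {m n rr} (M : 'M[Cplx]_(m,n)) : 'M[Cplx]_(m, rr) := col_ebase M *m pid_mx (\rank M).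
Definition fac2 {m n rr} (M : 'M[Cplx]_(m,n)) : 'M[Cplx]_(rr, n) := pid_mx (\rank M) *m row_ebase M.

Lemma facE m n rr (M : 'M[Cplx]_(m,n)) : (\rank M <= rr)%N -> fac1 (rr:=rr) M *m fac2 M = M.
Proof.
move=> h; rewrite /fac1 /fac2 mulmxA -(mulmxA (col_ebase M)) pid_mx_id //.
exact: mulmx_ebase.
Qed.
End Gen.

Section Arith.
Variables a1 b1 e r f d2 c2 : nat.
Hypotheses (ha1 : (0 < a1)%N) (hb1 : (0 < b1)%N) (he : (0 < e)%N) (hr : (0 < r)%N)
  (hf : (0 < f)%N) (hd2 : (0 < d2)%N) (hc2 : (0 < c2)%N).

Definition P1 := Pattern a1 b1 (r*e) (f*d2).
Definition P2 := Pattern (e*a1) (r*f) c2 d2.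
Definition DD := (f * d2)%N.
Definition NN := (r * DD)%N.

Lemma hD : (0 < DD)%N. Proof. by rewrite /DD muln_gt0 hf hd2. Qed.
Lemma hN : (0 < NN)%N. Proof. by rewrite /NN muln_gt0 hr hD. Qed.

Lemma kE : ncols P1 = (a1 * e * NN)%N.
Proof. rewrite /ncols /NN /DD /=; ring. Qed.
Lemma k2E : nrows P2 = ncols P1.
Proof. rewrite /ncols /nrows /=; ring. Qed.
Lemma pstarE : pstar P1 P2 = Pattern a1 (b1*f) (e*c2) d2.
Proof.
rewrite /pstar /=.
have -> : ((b1 * (f * d2)) %/ d2 = b1 * f)%N by rewrite mulnA mulnK.
by have -> : ((e * a1 * c2) %/ a1 = e * c2)%N by rewrite (mulnAC e a1 c2) mulnK.
Qed.
Lemma nr3 : nrows (pstar P1 P2) = nrows P1.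
Proof. rewrite pstarE /nrows /=; ring. Qed.
Lemma nc3 : ncols (pstar P1 P2) = ncols P2.
Proof. rewrite pstarE /ncols /=; ring. Qed.
Lemma rchainE : rchain P1 P2 = r.
Proof. rewrite /rchain /=. have -> : (a1 * (r * e) = r * (e * a1))%N by ring. by rewrite mulnK // muln_gt0 he ha1. Qed.

Lemma S1E x j : S_entry P1 x j =
  [&& (x < nrows P1)%N, (j < ncols P1)%N, x %/ (b1*DD) == j %/ NN %/ e & x %% DD == j %% DD].
Proof.
rewrite /S_entry /= -divnMA /NN /DD.
by have -> : (r * e * (f * d2) = r * (f * d2) * e)%N by ring.
Qed.

Lemma S2E j y : S_entry P2 j y =
  [&& (j < ncols P1)%N, (y < ncols P2)%N, j %/ NN == y %/ (c2*d2) & j %% d2 == y %% d2].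
Proof.
rewrite /S_entry k2E /= /NN /DD.
by have -> : (r * f * d2 = r * (f * d2))%N by ring.
Qed.

Lemma S3E x y : S_entry (pstar P1 P2) x y =
  [&& (x < nrows P1)%N, (y < ncols P2)%N, x %/ (b1*DD) == y %/ (c2*d2) %/ e & x %% d2 == y %% d2].
Proof.
rewrite /S_entry nr3 nc3 pstarE /= -divnMA /DD.
have -> : (b1 * f * d2 = b1 * (f * d2))%N by ring.
by have -> : (e * c2 * d2 = c2 * d2 * e)%N by ring.
Qed.

Lemma modD2 i : i %% DD %% d2 = i %% d2.
Proof. by rewrite /DD modn_dvdm // dvdn_mull. Qed.

Lemma keyF x i j y : S_entry P1 x i -> S_entry P1 x j -> S_entry P2 i y -> S_entry P2 j y ->
  i %/ NN = j %/ NN /\ i %% DD = j %% DD.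
Proof.
rewrite !S1E !S2E => /and4P[_ _ _ /eqP h1] /and4P[_ _ _ /eqP h2] /and4P[_ _ /eqP h3 _]
  /and4P[_ _ /eqP h4 _]; split; congruence.
Qed.

Lemma keyS x y i j : i %/ NN = j %/ NN -> i %% DD = j %% DD ->
  (i < ncols P1)%N -> (j < ncols P1)%N ->
  S_entry P1 x i = S_entry P1 x j /\ S_entry P2 i y = S_entry P2 j y.
Proof.
move=> h1 h2 hi hj; rewrite !S1E !S2E hi hj h1 h2 -(modD2 i) -(modD2 j) h2; by split.
Qed.

Lemma S13 x j y : S_entry P1 x j -> S_entry P2 j y -> S_entry (pstar P1 P2) x y.
Proof.
rewrite !S1E !S2E S3E => /and4P[-> _ /eqP h1 /eqP h2] /and4P[_ -> /eqP h3 /eqP h4] /=.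
by rewrite h1 h3 eqxx /= -(modD2 x) h2 modD2 h4.
Qed.

Lemma S3wit x y : S_entry (pstar P1 P2) x y ->
  exists j, [/\ (j < ncols P1)%N, S_entry P1 x j & S_entry P2 j y].
Proof.
rewrite S3E => /and4P[hx hy /eqP h1 /eqP h2].
have hs : (x %% DD < NN)%N.
  apply: (leq_trans (ltn_pmod _ hD)); rewrite /NN leq_pmull //.
have hq : (y %/ (c2 * d2) < a1 * e)%N.
  rewrite ltn_divLR; last by rewrite muln_gt0 hc2 hd2.
  move: hy; rewrite /ncols /=.
  by have -> : (e * a1 * c2 * d2 = a1 * e * (c2 * d2))%N by ring.
set j := (y %/ (c2 * d2) * NN + x %% DD)%N.
have hjN : j %/ NN = y %/ (c2 * d2).
  by rewrite /j divnMDl ?hN // (divn_small hs) addn0.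
have hjD : j %% DD = x %% DD.
  by rewrite /j /NN mulnA modnMDl modn_mod.
have hj : (j < ncols P1)%N.
  rewrite kE /j.
  apply: (@leq_trans ((y %/ (c2 * d2)).+1 * NN)); first by rewrite mulSn addnC ltn_add2r.
  by rewrite leq_mul2r hq orbT.
exists j; split => //.
  by rewrite S1E hx hj hjN hjD -h1 !eqxx.
by rewrite S2E hj hy hjN eqxx -modD2 hjD modD2 h2 eqxx.
Qed.

Lemma tf_lt j : ((j %% NN) %/ DD < r)%N.
Proof. by rewrite ltn_divLR ?hD // -/NN ltn_pmod ?hN. Qed.

Lemma decomp j : j = (j %/ NN * NN + j %% DD + (j %% NN) %/ DD * DD)%N.
Proof.
rewrite {1}(divn_eq j NN) -addnA; congr (_ + _).
rewrite addnC {1}(divn_eq (j %% NN) DD); congr (_ + _).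
by rewrite /NN modn_dvdm // dvdn_mull.
Qed.

Lemma compose q s t : (s < DD)%N -> (t < r)%N ->
  let j := (q * NN + s + t * DD)%N in
  [/\ j %/ NN = q, j %% DD = s & (j %% NN) %/ DD = t].
Proof.
move=> hs ht j.
have hts : (s + t * DD < NN)%N.
  rewrite /NN; apply: (@leq_trans (t.+1 * DD)); first by rewrite mulSnr addnC ltn_add2l.
  by rewrite leq_mul2r ht orbT.
have e1 : j %% NN = (s + t * DD)%N by rewrite /j -addnA modnMDl modn_small.
split.
- by rewrite /j -addnA divnMDl ?hN // divn_small // ?addn0.
- rewrite /j /NN mulnA -addnA (addnC s) addnA -mulnDl modnMDl modn_small //.
- by rewrite e1 addnC divnMDl ?hD // divn_small // ?addn0.
Qed.

Lemma compose_lt q s t : (q < a1 * e)%N -> (s < DD)%N -> (t < r)%N ->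
  (q * NN + s + t * DD < ncols P1)%N.
Proof.
move=> hq hs ht.
have hts : (s + t * DD < NN)%N.
  rewrite /NN; apply: (@leq_trans (t.+1 * DD)); first by rewrite mulSnr addnC ltn_add2l.
  by rewrite leq_mul2r ht orbT.
rewrite kE -addnA; apply: (@leq_trans (q.+1 * NN)); first by rewrite mulSnr ltn_add2l.
by rewrite leq_mul2r hq orbT.
Qed.

Lemma q_lt j : (j < ncols P1)%N -> (j %/ NN < a1 * e)%N.
Proof. by rewrite kE ltn_divLR ?hN. Qed.


Section Core.
Local Open Scope ring_scope.
Variable A : 'M[Cplx]_(nrows P1, ncols P2).

Definition SL := Smx P1 (nrows P1) (ncols P1).
Definition SR := Smx P2 (ncols P1) (ncols P2).

Lemma dirB : in_B P1 P2 A -> is_factor (pstar P1 P2) A /\ in_M P1 P2 A.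
Proof.
move=> [kk [X1 [X2 [[_ [hk1 h1]] [hk2 [_ h2]] ->]]]].
split.
  split; first by rewrite nr3. split; first by rewrite nc3.
  move=> x y hS; rewrite !mxE big1 // => j _.
  case h1x: (S_entry P1 x j); last by rewrite h1 ?h1x // mul0r.
  case h2y: (S_entry P2 j y); last by rewrite (h2 j y) ?h2y // mulr0.
  by move: hS; rewrite (S13 h1x h2y).
move=> P _ i _.
set Rs := RowsP _ _ i; set Cs := ColsP _ _ i.
pose Q := [set j : 'I_kk | (j %/ NN == i %/ NN)%N && (j %% DD == i %% DD)%N].
pose L : 'M[Cplx]_(#|Rs|, #|Q|) := \matrix_(a, t) X1 (enum_val a) (enum_val t).
pose U : 'M[Cplx]_(#|Q|, #|Cs|) := \matrix_(t, b) X2 (enum_val t) (enum_val b).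
have -> : subm (X1 *m X2) Rs Cs = L *m U.
  apply/matrixP => a b; rewrite !mxE.
  under [RHS]eq_bigr => t _ do rewrite !mxE.
  rewrite -(big_enum_val (fun j => X1 (enum_val a) j * X2 j (enum_val b))) /=.
  rewrite [RHS]big_mkcond /=; apply: eq_bigr => j _.
  case: ifP => // hjQ.
  have := enum_valP a; rewrite inE => /existsP[y0]; rewrite inE !mxE /= => /andP[ha _].
  have := enum_valP b; rewrite inE => /existsP[x0]; rewrite inE !mxE /= => /andP[_ hb].
  case h1x: (S_entry P1 (enum_val a) j); last by rewrite h1 ?h1x // mul0r.
  case h2y: (S_entry P2 j (enum_val b)); last by rewrite (h2 j) ?h2y // mulr0.
  have [e1 e2] := keyF ha h1x hb h2y.
  by move: hjQ; rewrite inE e1 e2 !eqxx.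
apply: leq_trans (mxrankM_maxl _ _) _.
apply: leq_trans (rank_leq_col _) _.
rewrite rchainE.
have htf : forall j : 'I_kk, ((j %% NN) %/ DD < r)%N by move=> j; apply: tf_lt.
suff /(leq_card_in _ Q) : {in Q &, injective (fun j : 'I_kk => Ordinal (htf j))}.
  by rewrite card_ord.
move=> j j'; rewrite !inE => /andP[/eqP q1 /eqP s1] /andP[/eqP q2 /eqP s2] [ht].
apply: val_inj => /=.
by rewrite (decomp j) (decomp j') q1 q2 s1 s2 ht.
Qed.

Definition Mj (j : 'I_(ncols P1)) := mask A (RowsP SL SR j) (ColsP SL SR j).
Definition Fj (j : 'I_(ncols P1)) : 'M[Cplx]_(nrows P1, r.-1.+1) := fac1 (Mj j).
Definition Gj (j : 'I_(ncols P1)) : 'M[Cplx]_(r.-1.+1, ncols P2) := fac2 (Mj j).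
Definition tf (j : nat) : 'I_(r.-1.+1) := inord ((j %% NN) %/ DD).
Definition X1m : 'M[Cplx]_(nrows P1, ncols P1) :=
  \matrix_(x, j) if S_entry P1 x j then Fj j x (tf j) else 0.
Definition X2m : 'M[Cplx]_(ncols P1, ncols P2) :=
  \matrix_(j, y) if S_entry P2 j y then Gj j (tf j) y else 0.

Lemma tfE (j : nat) : val (tf j) = ((j %% NN) %/ DD)%N.
Proof. by rewrite /tf /= inordK // prednK // tf_lt. Qed.

Lemma Mj_eq (j j0 : 'I_(ncols P1)) : (j %/ NN = j0 %/ NN)%N -> (j %% DD = j0 %% DD)%N -> Mj j = Mj j0.
Proof.
move=> e1 e2.
have HU : Usupp SL SR j = Usupp SL SR j0.
  apply/setP => -[x' y']; rewrite !inE !mxE /=.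
  by have [-> ->] := keyS x' y' e1 e2 (ltn_ord j) (ltn_ord j0).
by rewrite /Mj /RowsP /ColsP HU.
Qed.

Lemma dirA : is_factor (pstar P1 P2) A -> in_M P1 P2 A -> in_B P1 P2 A.
Proof.
move=> [_ [_ hA]] hM.
have hrk : forall j, (\rank (Mj j) <= r.-1.+1)%N.
  move=> j; rewrite prednK // -rchainE.
  apply: leq_trans (rank_mask _ _ _) _.
  have hpart : partition (Ppart SL SR) [set: 'I_(ncols P1)].
    apply: equivalence_partitionP => a b c _ _ _ /=; split; first by rewrite eqxx.
    by move/eqP->.
  have hcov : j \in cover (Ppart SL SR).
    by case/and3P: hpart => /eqP -> _ _; rewrite inE.
  exact: (hM _ (pblock_mem hcov) j (eq_ind_r (fun b => is_true b) hcov (mem_pblock _ _))).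
have hF : forall j, Fj j *m Gj j = Mj j by move=> j; apply: facE.
exists (ncols P1), X1m, X2m; split.
- split=> //; split=> // x j h; by rewrite mxE h.
- split; first by rewrite k2E. split=> // j y h; by rewrite mxE h.
apply/matrixP => x y; rewrite mxE.
case hS: (S_entry (pstar P1 P2) x y); last first.
  rewrite hA ?hS // big1 // => j _; rewrite !mxE.
  case h1: (S_entry P1 x j); last by rewrite mul0r.
  case h2: (S_entry P2 j y); last by rewrite mulr0.
  by move: hS; rewrite (S13 h1 h2).
have [j0n [hj0 h10 h20]] := S3wit hS.
pose j0 : 'I_(ncols P1) := Ordinal hj0.
rewrite (eq_bigr (fun j : 'I_(ncols P1) => if S_entry P1 x j && S_entry P2 j y
   then Fj j0 x (tf j) * Gj j0 (tf j) y else 0)); last first.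
  move=> j _; rewrite !mxE.
  case h1: (S_entry P1 x j); last by rewrite mul0r.
  case h2: (S_entry P2 j y); last by rewrite mulr0.
  have [e1 e2] := keyF h1 h10 h2 h20.
  by rewrite /= /Fj /Gj (Mj_eq (j0 := j0) e1 e2).
rewrite -big_mkcond /=.
pose base := (j0n %/ NN * NN + j0n %% DD)%N.
pose h (t : 'I_(r.-1.+1)) : 'I_(ncols P1) := insubd j0 (base + t * DD)%N.
have ht_lt : forall t : 'I_(r.-1.+1), (t < r)%N.
  by move=> t; apply: (leq_trans (ltn_ord t)); rewrite prednK.
have hh : forall t, val (h t) = (base + t * DD)%N.
  move=> t; rewrite val_insubd /base compose_lt //.
    exact: q_lt.
  exact: ltn_pmod hD.
have hkey : forall t, (h t %/ NN = j0n %/ NN)%N /\ (h t %% DD = j0n %% DD)%N /\ tf (h t) = t.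
  move=> t; rewrite hh /base.
  have [c1 c2' c3] := compose (j0n %/ NN) (ltn_pmod j0n hD) (ht_lt t).
  split=> //; split=> //; apply: val_inj; by rewrite tfE.
rewrite (reindex_onto h tf); last first.
  move=> j /andP[h1 h2]; have [e1 e2] := keyF h1 h10 h2 h20.
  apply: val_inj; rewrite val_insubd tfE /base -e1 -e2 -decomp ltn_ord //.
rewrite (eq_bigl (fun _ => true)); last first.
  move=> t; have [e1 [e2 e3]] := hkey t.
  have [-> ->] := keyS x y e1 e2 (ltn_ord (h t)) hj0.
  by rewrite h10 h20 e3 eqxx.
under eq_bigr => t _ do rewrite (proj2 (proj2 (hkey t))).
have := congr1 (fun M : 'M[Cplx]_(_,_) => M x y) (hF j0); rewrite !mxE /= => ->.
rewrite ifT //; apply/andP; split; rewrite inE; apply/existsP.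
  by exists y; rewrite inE !mxE h10 h20.
by exists x; rewrite inE !mxE h10 h20.
Qed.

End Core.
End Arith.

Theorem lemma4p13 (p1 p2 : pattern) :
  pattern_pos p1 -> pattern_pos p2 -> chainable p1 p2 ->
  forall A : 'M[Cplx]_(nrows p1, ncols p2),
    in_B p1 p2 A <-> (is_factor (pstar p1 p2) A /\ in_M p1 p2 A).
Proof.
case: p1 => a1 b1 c1 d1; case: p2 => a2 b2 c2 d2.
case=> /= ha1 hb1 hc1 hd1 [/= ha2 hb2 hc2 hd2] [/= h1 h2 h3 h4 h5].
case/dvdnP: h4 => e ea2; case/dvdnP: h5 => f ed1.
have [r hrd] : exists r, r = (a1 * c1) %/ a2 by eexists.
have hc1e : c1 = (r * e)%N.
  apply/eqP; rewrite -(eqn_pmul2l ha1); apply/eqP.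
  rewrite hrd -{1}(divnK h1) ea2; ring.
have hb2r : b2 = (r * f)%N.
  apply/eqP; rewrite -(eqn_pmul2r hd2); apply/eqP.
  rewrite hrd h3 -{1}(divnK h2) ed1; ring.
clear hrd h1 h2 h3.
subst c1 b2 a2 d1.
have hr : (0 < r)%N by move: hc1; rewrite muln_gt0 => /andP[].
have he : (0 < e)%N by move: hc1; rewrite muln_gt0 => /andP[].
have hf : (0 < f)%N by move: hd1; rewrite muln_gt0 => /andP[].
move=> A; split.
  exact: (dirB ha1 he hr hf hd2).
by case=> ??; apply: (dirA ha1 he hr hf hd2 hc2).
Qed.
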